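(* Assume the setting of the context. Then: (1) $y$ admits a constant arithmetic subsequence (there exist $p\ge1$, $k\in\mathbb Z$, $b\in\mathcal B$ with $y_{k+np}=b$ for all $n\in\mathbb Z$) if and only if some vertex $\mathcal C$ of $G(\sigma)$ satisfies that $\phi(\mathcal C)$ is a singleton; (2) $y$ is periodic if and only if there exists $N$ such that every walk of length at least $N$ in $G(\sigma)$ ends at a vertex $\mathcal C$ with $\phi(\mathcal C)$ a singleton.
   Context: Let $\sigma:\mathcal A^*\to\mathcal A^*$ be a primitive substitution of constant length $l\ge2$, $x\in\mathcal A^{\mathbb Z}$ an admissible two-sided fixed point of $\sigma$ (so $x_{lj+i}=\sigma(x_j)_i$, $w_i$ being the $i$-th letter of $w$ indexed from $0$), $\phi:\mathcal A\to\mathcal B$ a coding, $y=\phi(x)$; the subshift generated by $x$ is assumed non-periodic. Height $h=\max\{n\ge1 : \gcd(n,l)=1,\ n\mid g_0\}$, $g_0=\gcd\{n\ge1:x_n=x_0\}$. For $0\le i<h$, $\mathcal A_i=\{x_{i+nh}:n\in\mathbb Z\}$. Graph $G(\sigma)$: vertices are subsets of $\mathcal A$; for a subset $\mathcal C$ and $0\le i<l$ there is an edge labelled $i$ from $\mathcal C$ to $\{\sigma(b)_i : b\in\mathcal C\}$; $G(\sigma)$ is restricted to vertices reachable from $\mathcal A_0,\dots,\mathcal A_{h-1}$. $\phi(\mathcal C)=\{\phi(c):c\in\mathcal C\}$. *)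

(* Defs.v *)
From HB Require Import structures.
From mathcomp Require Import all_boot all_order all_algebra.
Set Implicit Arguments. Unset Strict Implicit. Unset Printing Implicit Defensive.
Import Order.TTheory GRing.Theory Num.Theory.
Local Open Scope ring_scope.

(* A substitution of constant length l is a map sigma : A -> l.-tuple A;
   sigma(b)_i is  tnth (sigma b) i  for i : 'I_l. *)

(* i-th letter (indexed from 0) of sigma^n(a); meaningful for i < l^n. *)
Fixpoint subst_iter (A : finType) (l : nat) (sigma : A -> l.-tuple A)
    (n : nat) (a : A) (i : nat) : A :=
  match n with
  | 0 => a
  | n'.+1 => nth a (sigma (subst_iter sigma n' a (i %/ l)%N)) (i %% l)%N
  end.

Definition primitive (A : finType) (l : nat) (sigma : A -> l.-tuple A) : Prop :=
  exists n : nat, (0 < n)%N /\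
    forall a b : A, exists i : nat, (i < l ^ n)%N /\ subst_iter sigma n a i = b.

Definition two_sided_fixed_point (A : finType) (l : nat)
    (sigma : A -> l.-tuple A) (x : int -> A) : Prop :=
  forall (j : int) (i : 'I_l), x (l%:Z * j + (i : nat)%:Z) = tnth (sigma (x j)) i.

Definition admissible (A : finType) (l : nat) (sigma : A -> l.-tuple A)
    (x : int -> A) : Prop :=
  exists (n : nat) (a : A) (i : nat), (i.+1 < l ^ n)%N /\
    subst_iter sigma n a i = x (-1) /\ subst_iter sigma n a i.+1 = x 0.

Definition periodic (T : Type) (z : int -> T) : Prop :=
  exists p : nat, (0 < p)%N /\ forall n : int, z (n + p%:Z) = z n.

Definition has_const_arith_subseq (T : Type) (z : int -> T) : Prop :=
  exists (p : nat) (k : int) (b : T), (0 < p)%N /\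
    forall n : int, z (k + n * p%:Z) = b.

(* h is the height: the largest n >= 1 with gcd(n,l)=1 and n | g0, where
   g0 = gcd {m >= 1 : x_m = x_0}; "n | g0" is unfolded as
   "n divides every m >= 1 with x_m = x_0". *)
Definition divides_return_times (A : finType) (x : int -> A) (n : nat) : Prop :=
  forall m : nat, (1 <= m)%N -> x m%:Z = x 0 -> (n %| m)%N.

Definition is_height (A : finType) (l : nat) (x : int -> A) (h : nat) : Prop :=
  [/\ (1 <= h)%N, coprime h l, divides_return_times x h &
      forall n : nat, (1 <= n)%N -> coprime n l -> divides_return_times x n ->
        (n <= h)%N].

(* Vertices of G(sigma) are subsets of A, represented as predicates A -> Prop. *)
Definition vset (A : Type) := A -> Prop.

Definition height_class (A : finType) (x : int -> A) (h i : nat) : vset A :=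
  fun a => exists n : int, x (i%:Z + n * h%:Z) = a.

(* edge labelled i : C -> { sigma(b)_i : b in C } *)
Definition gstep (A : finType) (l : nat) (sigma : A -> l.-tuple A)
    (C : vset A) (i : 'I_l) : vset A :=
  fun a => exists b, C b /\ tnth (sigma b) i = a.

Definition gwalk (A : finType) (l : nat) (sigma : A -> l.-tuple A)
    (C : vset A) (w : seq 'I_l) : vset A :=
  foldl (gstep sigma) C w.

Definition image_singleton (A B : Type) (phi : A -> B) (C : vset A) : Prop :=
  exists b : B, (exists c, C c) /\ forall c, C c -> phi c = b.

(* Main.v *)
Require Import Defs.
From HB Require Import structures.
From mathcomp Require Import all_boot all_order all_algebra.
From mathcomp Require Import cyclic zify ring.
From Stdlib Require Import ClassicalEpsilon.
Import Order.TTheory GRing.Theory Num.Theory.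
Set Implicit Arguments. Unset Strict Implicit.
Local Open Scope ring_scope.

Lemma FP (A : finType) (l : nat) (sigma : A -> l.-tuple A) (x : int -> A) :
  (0 < l)%N -> two_sided_fixed_point sigma x ->
  forall (K : nat) (m : int) (c : nat), (c < l ^ K)%N ->
  x ((l ^ K)%:Z * m + c%:Z) = subst_iter sigma K (x m) c.
Proof.
move=> l0 fp K m; elim: K => [|K IH] c hc /=.
  have -> : c = 0%N by move: hc; rewrite expn0; case: c.
  by rewrite expn0 mul1r addr0.
have hc' : (c %/ l < l ^ K)%N by rewrite ltn_divLR // -expnSr.
rewrite -IH // -(tnth_nth _ _ (Ordinal (ltn_pmod c l0))) -fp /=.
congr x.
rewrite {1}(divn_eq c l) expnSr !PoszD !PoszM; ring.
Qed.

Arguments FP {A l sigma x} _ _ K m c _.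

Lemma subst_comp (A : finType) (l : nat) (sigma : A -> l.-tuple A) :
  forall n k a c, (c < l ^ n)%N ->
  subst_iter sigma (k + n) a c = subst_iter sigma n (subst_iter sigma k a 0) c.
Proof.
elim=> [|n IH] k a c hc.
  have -> : c = 0%N by move: hc; rewrite expn0; case: c.
  by rewrite addn0.
have l0 : (0 < l)%N by case: (posnP l) hc => [->|//]; rewrite exp0n.
rewrite addnS /= IH //.
  by apply: set_nth_default; rewrite size_tuple ltn_pmod.
by rewrite ltn_divLR // -expnSr.
Qed.

Definition code {l : nat} (w : seq 'I_l) : nat :=
  foldl (fun acc (i : 'I_l) => acc * l + i)%N 0%N w.

Lemma code_rcons l (w : seq 'I_l) i : code (rcons w i) = (code w * l + i)%N.
Proof. by rewrite /code foldl_rcons. Qed.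

Lemma code_lt l (w : seq 'I_l) : (0 < l)%N -> (code w < l ^ size w)%N.
Proof.
move=> l0; elim/last_ind: w => [|w i IH]; first by rewrite /code /= expn0.
rewrite code_rcons size_rcons expnSr.
have := ltn_ord i; move: (code w) (nat_of_ord i) IH => a b h1 h2.
have : (a.+1 * l <= l ^ size w * l)%N by rewrite leq_mul2r h1 orbT.
rewrite mulSn; lia.
Qed.

Lemma digits l K c : (0 < l)%N -> (c < l ^ K)%N ->
  exists w : seq 'I_l, size w = K /\ code w = c.
Proof.
move=> l0; elim: K c => [|K IH] c hc.
  exists [::]; split => //; move: hc; rewrite expn0; case: c => //.
have hc' : (c %/ l < l ^ K)%N by rewrite ltn_divLR // -expnSr.
have [w [sw cw]] := IH _ hc'.
exists (rcons w (Ordinal (ltn_pmod c l0))); split; first by rewrite size_rcons sw.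
by rewrite code_rcons cw /= -divn_eq.
Qed.

Lemma gwalk_sub (A : finType) (l : nat) (sigma : A -> l.-tuple A) (C : vset A) :
  (0 < l)%N -> forall w a, gwalk sigma C w a <->
    exists b, C b /\ subst_iter sigma (size w) b (code w) = a.
Proof.
move=> l0; elim/last_ind => [|w i IH] a.
  by rewrite /gwalk /=; split; [move=> ?; exists a | move=> [b [? <-]]].
rewrite /gwalk foldl_rcons -/(gwalk sigma C w) size_rcons code_rcons /=.
have E1 : ((code w * l + i) %/ l = code w)%N.
  by rewrite divnMDl // divn_small ?addn0.
have E2 : ((code w * l + i) %% l = i)%N by rewrite modnMDl modn_small.
rewrite E1 E2; split.
  move=> [b' [/IH [b [Cb eb]] <-]]; exists b; split => //.
  by rewrite eb (tnth_nth b).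
move=> [b [Cb <-]]; exists (subst_iter sigma (size w) b (code w)); split.
  by apply/IH; exists b.
by rewrite (tnth_nth b).
Qed.

Lemma powmod (l M n0 : nat) : (0 < l)%N -> coprime M l -> (0 < M)%N -> (0 < n0)%N ->
  exists E s : nat, (n0 <= E)%N /\ (l ^ E = s * M + 1)%N.
Proof.
move=> l0 cML M0 n00.
have eu : (l ^ totient M = 1 %[mod M])%N by apply: Euler_exp_totient; rewrite coprime_sym.
exists (totient M * n0)%N, ((l ^ (totient M * n0) - 1) %/ M)%N; split.
  by rewrite leq_pmull // totient_gt0.
have h1 : (l ^ (totient M * n0) == 1 %[mod M])%N.
  by rewrite expnM -modnXm eu modnXm exp1n.
have lp : (1 <= l ^ (totient M * n0))%N by rewrite expn_gt0 l0.
rewrite eqn_mod_dvd // in h1.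
rewrite divnK //; lia.
Qed.

Lemma fact1 (A : finType) (l : nat) (sigma : A -> l.-tuple A) (x : int -> A) (h q : nat) :
  (2 <= l)%N -> primitive sigma -> two_sided_fixed_point sigma x -> admissible sigma x ->
  is_height l x h -> coprime q l -> (0 < q)%N ->
  forall (r n : int), exists z : int, x (r + z * (h * q)%N%:Z) = x (r + n * h%:Z).
Proof.
move=> l2 [n0 [n00 prim]] fp [n' [a' [i' [hi' [ea1 ea2]]]]] [h1 chl hdiv hmax] cql q0.
have l0 : (0 < l)%N by apply: leq_trans l2.
pose M := (h * q)%N.
have M0 : (0 < M)%N by rewrite muln_gt0 q0 andbT.
have cML : coprime M l by rewrite coprimeMl chl cql.
have [E [s [nE LmE]]] := powmod l0 cML M0 n00.
have Lm2 : (2 <= l ^ E)%N.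
  apply: (leq_trans l2); rewrite -{1}(expn1 l) leq_pexp2l //; lia.
have primE : forall a b, exists c, ((c < l ^ E) && (subst_iter sigma E a c == b))%N.
  move=> a b; have [c [hc ec]] := prim (subst_iter sigma (E - n0) a 0) b.
  exists c; apply/andP; split.
    by apply: (leq_trans hc); rewrite leq_pexp2l.
  have eE : E = (E - n0 + n0)%N by rewrite subnK.
  by rewrite eE subst_comp // ec.
pose Mz := M%:Z.
pose P := fun a r => exists z : int, x (r + z * Mz) = a.
have Pmod : forall a r z, P a r -> P a (r + z * Mz).
  move=> a r z [z' e]; exists (z' - z); rewrite -e; congr x; ring.
have Pe : forall a r1 r2, r1 = r2 -> P a r1 -> P a r2 by move=> a r1 r2 ->.
have LmZ : (l ^ E)%N%:Z = s%:Z * Mz + 1 by rewrite LmE PoszD PoszM.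
have PA : forall a b c r, (c < l ^ E)%N -> subst_iter sigma E a c = b ->
    P a r -> P b (r + c%:Z).
  move=> a b c r hc eb [z ez]; exists (s%:Z * (r + z * Mz) + z).
  rewrite -eb -ez -FP //; congr x; rewrite LmZ; ring.
have inv : forall (Q : int -> Prop) k, (forall r z, Q r -> Q (r + z * Mz)) ->
    (forall r, Q r -> Q (r + k)) -> forall r, Q r -> Q (r - k).
  move=> Q k Qm Qk.
  have Qj : forall j : nat, forall r, Q r -> Q (r + j%:Z * k).
    elim=> [|j IH] r Qr; first by rewrite mul0r addr0.
    rewrite -[j.+1]addn1 PoszD mulrDl mul1r addrA; exact: Qk (IH _ Qr).
  move=> r Qr; have := Qm _ (- k) (Qj M.-1 _ Qr).
  have eM : Mz = (M.-1)%:Z + 1 by rewrite /Mz -PoszD addn1 prednK.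
  suff -> : r + (M.-1)%:Z * k + - k * Mz = r - k by [].
  rewrite eM; ring.
have back : forall a b c r, (c < l ^ E)%N -> subst_iter sigma E a c = b ->
    P b r -> P a (r - c%:Z).
  move=> a b c r hc eb Pb.
  have [c' /andP[hc' /eqP ec']] := primE b a.
  have Pbk : forall r, P b r -> P b (r + (c%:Z + c'%:Z)).
    move=> r0 H; apply: Pe (PA _ _ _ _ hc eb (PA _ _ _ _ hc' ec' H)); ring.
  apply: Pe (PA _ _ _ _ hc' ec' (inv (P b) _ (Pmod b) Pbk r Pb)); ring.
pose tau := fun b => xchoose (primE (x 0) b).
have tauP : forall b, ((tau b < l ^ E) && (subst_iter sigma E (x 0) (tau b) == b))%N.
  by move=> b; exact: (xchooseP (primE (x 0) b)).
have Pb_iff : forall b r, P b r <-> P (x 0) (r - (tau b)%:Z).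
  move=> b r; have /andP[ht /eqP et] := tauP b; split.
    exact: back.
  by move=> H; apply: Pe (PA _ _ _ _ ht et H); ring.
pose G := fun g : int => forall r, P (x 0) r <-> P (x 0) (r + g).
have Gadd : forall g1 g2, G g1 -> G g2 -> G (g1 + g2).
  move=> g1 g2 H1 H2 r; rewrite addrA; exact: iff_trans (H1 r) (H2 (r + g1)).
have Gneg : forall g, G g -> G (- g).
  move=> g H r; have := H (r - g); rewrite subrK => H'; exact: iff_sym H'.
have GM : forall z, G (z * Mz).
  move=> z r; split; first exact: Pmod.
  by move=> H; apply: Pe (Pmod _ _ (- z) H); ring.
have Geq : forall g1 g2, G g1 -> g1 = g2 -> G g2 by move=> g1 g2 H <-.
have Gnat : forall g, G g -> forall n : nat, G (n%:Z * g).
  move=> g Gg; elim=> [|n IH]; first by apply: Geq (GM 0) _; rewrite !mul0r.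
  by apply: Geq (Gadd _ _ IH Gg) _; rewrite -[n.+1]addn1 PoszD mulrDl mul1r.
have Gint : forall g, G g -> forall z : int, G (z * g).
  move=> g Gg [n|n]; first exact: Gnat.
  by apply: Geq (Gneg _ (Gnat _ Gg n.+1)) _; rewrite NegzE mulNr.
have Gkey : forall a b c, (c < l ^ E)%N -> subst_iter sigma E a c = b ->
    G ((tau b)%:Z - c%:Z - (tau a)%:Z).
  move=> a b c hc eb r.
  have e1 := Pb_iff b (r + (tau b)%:Z); rewrite addrK in e1.
  have e2 : P b (r + (tau b)%:Z) <-> P a (r + (tau b)%:Z - c%:Z).
    split; first exact: back.
    by move=> H; apply: Pe (PA _ _ _ _ hc eb H); ring.
  have e3 := Pb_iff a (r + (tau b)%:Z - c%:Z).
  have -> : r + ((tau b)%:Z - c%:Z - (tau a)%:Z) = r + (tau b)%:Z - c%:Z - (tau a)%:Z by ring.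
  exact: iff_trans (iff_sym e1) (iff_trans e2 e3).
pose ph := fun t : int => t - (tau (x t))%:Z.
have step : forall t c, (c < l ^ E)%N -> G (ph ((l ^ E)%N%:Z * t + c%:Z) - ph t).
  move=> t c hc; have ex := FP l0 fp E t c hc.
  apply: Geq (Gadd _ _ (GM (s%:Z * t)) (Gneg _ (Gkey (x t) _ c hc (esym ex)))) _.
  rewrite /ph LmZ; ring.
have G0 : G 0 by apply: Geq (GM 0) _; rewrite mul0r.
have indpos : forall n : nat, G (ph n%:Z - ph 0).
  elim/ltn_ind => n IH; case: (posnP n) => [->|n0p]; first by rewrite subrr.
  have e : n%:Z = (l ^ E)%N%:Z * (n %/ l ^ E)%N%:Z + (n %% l ^ E)%N%:Z.
    by rewrite {1}(divn_eq n (l ^ E)) PoszD PoszM mulrC.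
  have H1 := step (n %/ l ^ E)%N%:Z (n %% l ^ E)%N (ltn_pmod _ (ltnW Lm2)).
  rewrite -e in H1.
  have H2 := IH _ (ltn_Pdiv Lm2 n0p).
  by apply: Geq (Gadd _ _ H1 H2) _; ring.
have indneg : forall n : nat, G (ph (Negz n) - ph (-1)).
  elim/ltn_ind => n IH; case: (posnP n) => [->|n0p]; first by rewrite subrr.
  have hc : ((l ^ E).-1 - n %% l ^ E < l ^ E)%N by lia.
  have e : Negz n = (l ^ E)%N%:Z * Negz (n %/ l ^ E) + ((l ^ E).-1 - n %% l ^ E)%N%:Z.
    have := divn_eq n (l ^ E); have := ltn_pmod n (ltnW Lm2).
    rewrite !NegzE; move: (n %/ l ^ E)%N (n %% l ^ E)%N (l ^ E)%N Lm2 => a b L.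
    move=> L2 bL ->; nia.
  have H1 := step (Negz (n %/ l ^ E)) _ hc.
  rewrite -e in H1.
  have H2 := IH _ (ltn_Pdiv Lm2 n0p).
  by apply: Geq (Gadd _ _ H1 H2) _; ring.
have [u /andP[hu /eqP eu]] := primE (x 0) a'.
have xu : x u%:Z = a'.
  by have := FP l0 fp E 0 u hu; rewrite mulr0 add0r eu.
have hi0 : (i' < l ^ n')%N by apply: ltnW.
have xT : x ((l ^ n' * u + i')%N%:Z) = x (-1).
  by rewrite PoszD PoszM (FP l0 fp) // xu.
have xT1 : x ((l ^ n' * u + i').+1%:Z) = x 0.
  by rewrite -addnS PoszD PoszM (FP l0 fp) // xu.
have Gm1 : G (ph (-1) - ph 0).
  have H := Gadd _ _ (indpos (l ^ n' * u + i')%N) (Gneg _ (indpos (l ^ n' * u + i').+1)).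
  apply: Geq H _; rewrite /ph xT xT1 -addn1 PoszD; ring.
have Gall : forall t, G (ph t - ph 0).
  case=> n; first exact: indpos.
  by apply: Geq (Gadd _ _ (indneg n) Gm1) _; ring.
have ret : forall m : nat, x m%:Z = x 0 -> G m%:Z.
  move=> m xm; apply: Geq (Gall m%:Z) _; rewrite /ph xm; ring.
pose Gb := fun d : nat => if excluded_middle_informative (G d%:Z) then true else false.
have GbP : forall d, Gb d -> G d%:Z by move=> d; rewrite /Gb; case: excluded_middle_informative.
have GbI : forall d, G d%:Z -> Gb d by move=> d; rewrite /Gb; case: excluded_middle_informative.
have GMn : G M%:Z by apply: Geq (GM 1) _; rewrite mul1r.
have exd : exists d, (0 < d)%N && Gb d by exists M; rewrite M0 GbI.
case: (ex_minnP exd) => d /andP[d0 /GbP Gd] dmin.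
have ddiv : forall m : nat, G m%:Z -> (d %| m)%N.
  move=> m Gm.
  have Gr : G (m %% d)%N%:Z.
    apply: Geq (Gadd _ _ Gm (Gneg _ (Gnat _ Gd (m %/ d)%N))) _.
    by rewrite {1}(divn_eq m d) PoszD PoszM; ring.
  case: (posnP (m %% d)) => [mo|pos]; first by rewrite /dvdn mo.
  have := dmin _ (introT andP (conj pos (GbI _ Gr))).
  by rewrite leqNgt ltn_pmod.
have cdl : coprime d l by apply: coprime_dvdl (ddiv _ GMn) cML.
have dh : (d %| h)%N.
  have hl : (lcmn d h <= h)%N.
    apply: hmax.
    - by rewrite lcmn_gt0 d0 h1.
    - have : (lcmn d h %| d * h)%N by rewrite dvdn_lcm dvdn_mulr ?dvdn_mull.
      move/coprime_dvdl; apply; by rewrite coprimeMl cdl chl.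
    - move=> m m1 xm; by rewrite dvdn_lcm (ddiv _ (ret _ xm)) (hdiv _ m1 xm).
  have : lcmn d h = h.
    by apply/eqP; rewrite eqn_leq hl dvdn_leq ?lcmn_gt0 ?d0 ?h1 // dvdn_lcmr.
  move=> <-; exact: dvdn_lcml.
have Gh : G h%:Z by apply: Geq (Gnat _ Gd (h %/ d)%N) _; rewrite -PoszM divnK.
move=> r n.
have H : P (x (r + n * h%:Z)) (r + n * h%:Z) by exists 0; rewrite mul0r addr0.
move/Pb_iff: H => H.
have H2 : P (x 0) (r - (tau (x (r + n * h%:Z)))%:Z).
  apply/(Gint _ Gh n); apply: Pe H; ring.
by have [z ez] := (Pb_iff _ r).2 H2; exists z.
Qed.

Lemma decomp (k : int) (L : nat) : (0 < L)%N ->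
  exists (m : int) (c : nat), (c < L)%N /\ k = L%:Z * m + c%:Z.
Proof.
move=> L0; exists (k %/ L)%Z, `|(k %% L)%Z|%N.
have ge : 0 <= (k %% L)%Z by apply: modz_ge0; rewrite eqz_nat -lt0n.
have lt : (k %% L)%Z < L%:Z by apply: ltz_pmod; rewrite ltz_nat.
have e := divz_eq k L.
have ea : (`|(k %% L)%Z|%N)%:Z = (k %% L)%Z by rewrite gez0_abs.
split; first by rewrite -ltz_nat ea.
by rewrite ea mulrC -e.
Qed.

Lemma per_int (T : Type) (z : int -> T) (p : int) :
  (forall n, z (n + p) = z n) -> forall n m, z (n + m * p) = z n.
Proof.
move=> hp n m.
have hn : forall k : nat, forall n, z (n + k%:Z * p) = z n.
  elim=> [|k IH] n0; first by rewrite mul0r addr0.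
  by rewrite -[k.+1]addn1 PoszD mulrDl mul1r addrA hp IH.
case: m => k; first exact: hn.
have e : n + Negz k * p + (k.+1)%:Z * p = n by rewrite NegzE mulNr subrK.
by rewrite -(hn k.+1 (n + Negz k * p)) e.
Qed.

Lemma factor (l p : nat) : (0 < p)%N ->
  exists K q : nat, [/\ coprime q l, (0 < q)%N & (p %| l ^ K * q)%N].
Proof.
elim/ltn_ind: p => p IH p0.
case cp: (coprime p l); first by exists 0%N, p; rewrite expn0 mul1n.
have g0 : (0 < gcdn p l)%N by rewrite gcdn_gt0 p0.
have g1 : (1 < gcdn p l)%N.
  rewrite ltn_neqAle g0 andbT eq_sym; move: cp; rewrite /coprime => ->; done.
have gp : (gcdn p l %| p)%N := dvdn_gcdl p l.
have ep : (p %/ gcdn p l * gcdn p l = p)%N := divnK gp.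
have p'0 : (0 < p %/ gcdn p l)%N.
  by rewrite divn_gt0 // dvdn_leq.
have [K [q [cq q0 hd]]] := IH _ (ltn_Pdiv g1 p0) p'0.
exists K.+1, q; split => //.
rewrite -{1}ep expnSr.
have -> : (l ^ K * l * q = (l ^ K * q) * l)%N by rewrite mulnAC.
exact: dvdn_mul hd (dvdn_gcdr p l).
Qed.

Lemma vertex (A : finType) (l : nat) (sigma : A -> l.-tuple A) (x : int -> A) (h j : nat) :
  (0 < l)%N -> two_sided_fixed_point sigma x ->
  forall w a, gwalk sigma (height_class x h j) w a <->
    exists n : int, x ((l ^ size w)%N%:Z * (j%:Z + n * h%:Z) + (code w)%:Z) = a.
Proof.
move=> l0 fp w a; rewrite gwalk_sub //; split.
  by move=> [b [[n eb] <-]]; exists n; rewrite (FP l0 fp) ?code_lt // eb.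
move=> [n <-]; exists (x (j%:Z + n * h%:Z)); split; first by exists n.
by rewrite (FP l0 fp) ?code_lt.
Qed.

Unset Implicit Arguments.

Theorem mainTheorem15 (A : finType) (B : Type) (l : nat)
    (sigma : A -> l.-tuple A) (x : int -> A) (phi : A -> B) (h : nat) :
  (2 <= l)%N ->
  primitive sigma ->
  two_sided_fixed_point sigma x ->
  admissible sigma x ->
  ~ periodic x ->
  is_height l x h ->
  let y := fun n : int => phi (x n) in
  (* (1) *)
  (has_const_arith_subseq y <->
     exists (j : nat) (w : seq 'I_l), (j < h)%N /\
       image_singleton phi (gwalk sigma (height_class x h j) w))
  /\
  (* (2) walks start at any vertex of G(sigma), i.e. any vertex reachable
     from some A_j by a walk w0 *)
  (periodic y <->
     exists N : nat, forall (j : nat) (w0 w : seq 'I_l), (j < h)%N ->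
       (N <= size w)%N ->
       image_singleton phi (gwalk sigma (gwalk sigma (height_class x h j) w0) w)).
Proof.
move=> l2 prim fp adm np ht y.
have l0 : (0 < l)%N by apply: leq_trans l2.
have [h1 chl _ _] := ht.
split.
- split.
  + move=> [p [k [b [p0 hy]]]].
    have [K [q [cq q0 hd]]] := factor l p0.
    have [m0 [c [hc ek]]] := decomp k (ltac:(by rewrite expn_gt0 l0) : (0 < l ^ K)%N).
    have [nq [j [hj em0]]] := decomp m0 h1.
    have [w [sw cw]] := digits l0 hc.
    have [t et] := dvdnP hd.
    exists j, w; split => //.
    exists b; split.
      exists (x ((l ^ size w)%N%:Z * (j%:Z + 0 * h%:Z) + (code w)%:Z)).
      by apply/(vertex _ _ l0 fp); exists 0.
    move=> a /(vertex _ _ l0 fp) [n <-].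
    have [z ez] := fact1 l2 prim fp adm ht cq q0 m0 (n - nq).
    have e1 : m0 + (n - nq) * h%:Z = j%:Z + n * h%:Z by rewrite em0; ring.
    rewrite e1 in ez.
    rewrite (FP l0 fp) ?code_lt // -ez -(FP l0 fp) ?code_lt // sw cw.
    have et'' : (l ^ K)%N%:Z * q%:Z = t%:Z * p%:Z by rewrite -!PoszM et.
    have e2 : (l ^ K)%N%:Z * (m0 + z * (h * q)%N%:Z) + c%:Z =
        k + (z * h%:Z * t%:Z) * p%:Z.
      rewrite ek PoszM.
      have -> : (l ^ K)%N%:Z * (m0 + z * (h%:Z * q%:Z)) + c%:Z =
        (l ^ K)%N%:Z * m0 + c%:Z + z * h%:Z * ((l ^ K)%N%:Z * q%:Z) by ring.
      by rewrite et''; ring.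
    rewrite e2; have := hy (z * h%:Z * t%:Z); by rewrite /y.
  + move=> [j [w [hj [b [_ hb]]]]].
    exists (l ^ size w * h)%N, ((l ^ size w)%N%:Z * j%:Z + (code w)%:Z), b; split.
      by rewrite muln_gt0 expn_gt0 l0.
    move=> n; rewrite /y; apply: hb; apply/(vertex _ _ l0 fp); exists n.
    congr x; rewrite PoszM; ring.
- split.
  + move=> [p [p0 hp]].
    have [K [q [cq q0 hd]]] := factor l p0.
    have [t et] := dvdnP hd.
    exists K => j w0 w hj hN.
    have eW : gwalk sigma (gwalk sigma (height_class x h j) w0) w =
              gwalk sigma (height_class x h j) (w0 ++ w) by rewrite /gwalk foldl_cat.
    rewrite eW; set W := w0 ++ w.
    have KW : (K <= size W)%N by rewrite size_cat; lia.
    exists (y ((l ^ size W)%N%:Z * j%:Z + (code W)%:Z)); split.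
      exists (x ((l ^ size W)%N%:Z * (j%:Z + 0 * h%:Z) + (code W)%:Z)).
      by apply/(vertex _ _ l0 fp); exists 0.
    move=> a /(vertex _ _ l0 fp) [n <-].
    have [z ez] := fact1 l2 prim fp adm ht cq q0 j%:Z n.
    rewrite (FP l0 fp) ?code_lt // -ez -(FP l0 fp) ?code_lt //.
    have [t' et'] : exists t', (l ^ size W * q = t' * p)%N.
      exists (l ^ (size W - K) * t)%N.
      by rewrite -{1}(subnK KW) expnD -mulnA et mulnA.
    have et'' : (l ^ size W)%N%:Z * q%:Z = t'%:Z * p%:Z by rewrite -!PoszM et'.
    have e2 : (l ^ size W)%N%:Z * (j%:Z + z * (h * q)%N%:Z) + (code W)%:Z =
        ((l ^ size W)%N%:Z * j%:Z + (code W)%:Z) + (z * h%:Z * t'%:Z) * p%:Z.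
      rewrite PoszM.
      have -> : (l ^ size W)%N%:Z * (j%:Z + z * (h%:Z * q%:Z)) + (code W)%:Z =
        (l ^ size W)%N%:Z * j%:Z + (code W)%:Z + z * h%:Z * ((l ^ size W)%N%:Z * q%:Z) by ring.
      by rewrite et''; ring.
    rewrite e2; have := per_int hp ((l ^ size W)%N%:Z * j%:Z + (code W)%:Z) (z * h%:Z * t'%:Z).
    by rewrite /y.
  + move=> [N HN].
    exists (l ^ N * h)%N; split; first by rewrite muln_gt0 expn_gt0 l0.
    move=> t.
    have [m [c [hc et]]] := decomp t (ltac:(by rewrite expn_gt0 l0) : (0 < l ^ N)%N).
    have [nq [j [hj em]]] := decomp m h1.
    have [w [sw cw]] := digits l0 hc.
    have [b [_ hb]] := HN j [::] w hj (eq_leq (esym sw)).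
    have mem : forall n : int, y ((l ^ N)%N%:Z * (j%:Z + n * h%:Z) + c%:Z) = b.
      move=> n; rewrite /y; apply: hb; apply/(vertex _ _ l0 fp); exists n; by rewrite sw cw.
    have e1 : (l ^ N)%N%:Z * m + c%:Z + (l ^ N * h)%N%:Z =
        (l ^ N)%N%:Z * (j%:Z + (nq + 1) * h%:Z) + c%:Z by rewrite em PoszM; ring.
    have e2 : (l ^ N)%N%:Z * m + c%:Z = (l ^ N)%N%:Z * (j%:Z + nq * h%:Z) + c%:Z.
      by rewrite em; ring.
    by rewrite et e1 mem e2 mem.
Qed.
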